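(* Let $F$ be an APN bijection of $\mathbb F_2^m$ with $F(0)=0$ and $S=STS(\mathcal H^n)$. Then every rotation line at every nonzero point of the self-embedding $S\cup F(S)$ has at least $6$ and at most $2^m-2$ points.
   Context: $n=2^m-1$; identify $\mathbb F_2^m$ with $GF(2^m)$. $F$ is APN if for all $a,b$ with $b\ne0$ the equation $F(x)+F(x+b)=a$ has at most two solutions. $S=STS(\mathcal H^n)$ is the set of 3-subsets $\{a,b,c\}$ of nonzero elements with $a+b+c=0$; $F(S)=\{\{F(a),F(b),F(c)\}:\{a,b,c\}\in S\}$. For nonzero $a$, let $P_a=\mathbb F_2^m\setminus\{0,a\}$, $s_a(y)=a+y$ and $\psi_a(y)=F(F^{-1}(a)+F^{-1}(y))$. The rotation lines at $a$ are the orbits on $P_a$ of the group generated by $s_a,\psi_a$; the number of points of a rotation line is the size of the orbit. *)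

(* Defs.v *)
(* F_2^m is modelled as the row space 'rV['F_2]_m
   (only the additive structure of GF(2^m) is used). *)
From HB Require Import structures.
From mathcomp Require Import all_boot all_order all_fingroup all_algebra.
Set Implicit Arguments. Unset Strict Implicit. Unset Printing Implicit Defensive.
Import GRing.Theory.
Local Open Scope ring_scope.

Notation V m := 'rV['F_2]_m.

Definition APN (m : nat) (F : V m -> V m) : Prop :=
  forall a b : V m, b != 0 -> leq #|[set x : V m | F x + F (x + b) == a]| 2.

Definition Pa (m : nat) (a : V m) : {set V m} := [set y | (y != 0) && (y != a)].

Definition s_ (m : nat) (a y : V m) : V m := a + y.

Definition psi_ (m : nat) (F : {perm V m}) (a y : V m) : V m :=
  F ((F^-1)%g a + (F^-1)%g y).

(* one step of the group <s_a, psi_a> acting on P_a: apply s_a (an involution),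
   psi_a, or psi_a^{-1} *)
Definition rot_step (m : nat) (F : {perm V m}) (a : V m) : rel (V m) :=
  fun y z => [&& y \in Pa a, z \in Pa a &
              [|| z == s_ a y, z == psi_ F a y | y == psi_ F a z]].

Definition rotation_line (m : nat) (F : {perm V m}) (a y : V m) : {set V m} :=
  [set z | connect (rot_step F a) y z].

(* Main.v *)
Require Import Defs.
From HB Require Import structures.
From mathcomp Require Import all_boot all_order all_fingroup all_algebra.
Local Open Scope ring_scope.
Import GRing.Theory.

Lemma addxx {m} (x : 'rV['F_2]_m) : x + x = 0.
Proof. apply/rowP => i; rewrite !mxE; exact: (addrr_pchar2 (pchar_Fp (isT : prime 2))). Qed.

Lemma addKx {m} (x y : 'rV['F_2]_m) : x + (x + y) = y.
Proof. by rewrite addrA addxx add0r. Qed.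

Lemma addxK {m} (x y : 'rV['F_2]_m) : (y + x) + x = y.
Proof. by rewrite -addrA addxx addr0. Qed.

Lemma eq_add {m} (x y : 'rV['F_2]_m) : (x + y == 0) = (x == y).
Proof.
apply/eqP/eqP => [H|->]; last exact: addxx.
by rewrite -(addxK y x) H add0r.
Qed.

Lemma six_distinct (T : eqType) (P : pred T) (s p : T -> T)
  (sP : forall x, P x -> P (s x)) (pP : forall x, P x -> P (p x))
  (ss : forall x, s (s x) = x) (pp : forall x, p (p x) = x)
  (hS : forall x, P x -> s x != x) (hP : forall x, P x -> p x != x)
  (hA : forall x, P x -> p x != s x) (hB : forall x, P x -> p (s x) != s (p x))
  y : P y -> uniq [:: y; s y; p y; s (p y); p (s y); s (p (s y))].
Proof.
move=> Py.
have Psy := sP _ Py; have Ppy := pP _ Py; have Ppsy := pP _ Psy.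
have is_s : forall a b, (s a == s b) = (a == b).
  by move=> a b; apply/eqP/eqP => [H|->] //; rewrite -(ss a) H ss.
have is_p : forall a b, (p a == p b) = (a == b).
  by move=> a b; apply/eqP/eqP => [H|->] //; rewrite -(pp a) H pp.
rewrite /= !inE !negb_or.
have e1 := hS _ Py. have e2 := hP _ Py. have e3 := hA _ Py. have e4 := hB _ Py.
have e5 := hP _ Psy. have e6 := hS _ Ppy. have e7 := hS _ Ppsy.
repeat (apply/andP; split).
all: try by rewrite eq_sym.
all: try by [].
- by rewrite -(is_s y) ss eq_sym.
- by rewrite -(is_p y) pp.
- by rewrite -(is_s y) ss eq_sym.
- by rewrite is_s eq_sym.
- by rewrite is_s -(is_p y) pp.
- by rewrite is_p eq_sym.
- by rewrite -(is_s (p y)) ss eq_sym.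
- by rewrite is_s is_p eq_sym.
Qed.

Lemma eqxD {m} (x y : 'rV['F_2]_m) : (x == x + y) = (y == 0).
Proof. by rewrite -eq_add addKx. Qed.

Lemma four_contra m (F : 'rV['F_2]_m -> 'rV['F_2]_m) (hAPN : APN F)
  (a w x1 x2 x3 x4 : 'rV['F_2]_m) : w != 0 -> uniq [:: x1; x2; x3; x4] ->
  F x1 + F (x1 + w) = a -> F x2 + F (x2 + w) = a ->
  F x3 + F (x3 + w) = a -> F x4 + F (x4 + w) = a -> False.
Proof.
move=> w0 U h1 h2 h3 h4.
have H4 : leq 4 #|[set x | F x + F (x + w) == a]|.
  apply/card_geqP; exists [:: x1; x2; x3; x4]; split => //.
  by move=> z; rewrite !inE => /or4P [] /eqP ->; apply/eqP.
by have := leq_trans H4 (hAPN a w w0).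
Qed.

Section Facts.
Variables (m : nat) (F : {perm 'rV['F_2]_m}).
Hypotheses (hF0 : F 0 = 0) (hAPN : APN F).
Variable a : 'rV['F_2]_m.
Hypothesis a0 : a != 0.

Let al := (F^-1)%g a.

Lemma Finv0 : (F^-1)%g 0 = 0.
Proof. by rewrite -{1}hF0 permK. Qed.

Lemma al0 : al != 0.
Proof. by apply: contraNneq a0 => H; rewrite -(permKV F a) -/al H hF0. Qed.

Lemma inPa y : (y \in Pa a) = (y != 0) && (y != a).
Proof. by rewrite inE. Qed.

Lemma Finv_ne0 y : y != 0 -> (F^-1)%g y != 0.
Proof. by apply: contraNneq => H; rewrite -(permKV F y) H hF0. Qed.

Lemma Finv_neal y : y != a -> (F^-1)%g y != al.
Proof. by apply: contraNneq => H; rewrite -(permKV F y) H permKV. Qed.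

Lemma sP y : y \in Pa a -> s_ a y \in Pa a.
Proof.
rewrite !inPa /s_ => /andP [y0 ya]; apply/andP; split.
  by rewrite eq_add eq_sym.
by rewrite eq_sym eqxD.
Qed.

Lemma pP y : y \in Pa a -> psi_ F a y \in Pa a.
Proof.
rewrite !inPa /psi_ => /andP [y0 ya]; apply/andP; split.
  rewrite -hF0 (inj_eq perm_inj) eq_add -/al eq_sym. exact: Finv_neal.
rewrite -{2}(permKV F a) (inj_eq perm_inj) -/al eq_sym eqxD.
exact: Finv_ne0.
Qed.

Lemma ssK y : s_ a (s_ a y) = y.
Proof. exact: addKx. Qed.

Lemma ppK y : psi_ F a (psi_ F a y) = y.
Proof. by rewrite /psi_ permK addKx permKV. Qed.

Lemma hS y : s_ a y != y.
Proof. by rewrite /s_ eq_sym -{1}(add0r y) (inj_eq (addIr y)) eq_sym. Qed.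

Lemma hP y : psi_ F a y != y.
Proof.
rewrite /psi_ -{2}(permKV F y) (inj_eq perm_inj) -{2}(add0r ((F^-1)%g y)).
by rewrite (inj_eq (addIr _)) al0.
Qed.

Lemma hA y : y \in Pa a -> psi_ F a y != s_ a y.
Proof.
rewrite inPa => /andP [y0 ya]; rewrite /psi_ /s_ -/al.
set u := (F^-1)%g y.
have Fu : F u = y by rewrite permKV.
have u0 : u != 0 by exact: Finv_ne0.
have ua : u != al by exact: Finv_neal.
have Fal : F al = a by rewrite permKV.
apply/eqP => E.
apply: (@four_contra _ _ hAPN a al 0 al u (al + u) al0).
- rewrite /= !inE !negb_or andbT.
  have ua' : al != u by rewrite eq_sym.
  rewrite ![0 == _]eq_sym al0 u0 eq_add ua' eqxD u0 /=.
  by rewrite addrC eqxD al0.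
- by rewrite hF0 !add0r Fal.
- by rewrite addxx hF0 addr0.
- by rewrite (addrC u al) E Fu addrCA addxx addr0.
- by rewrite (addrC (al + u) al) addKx E Fu addxK.
Qed.

Lemma hB y : y \in Pa a -> psi_ F a (s_ a y) != s_ a (psi_ F a y).
Proof.
move=> Py; have := @hA y Py.
move: Py; rewrite inPa => /andP [y0 ya]; rewrite /psi_ /s_ -/al => hAy.
set u := (F^-1)%g y in hAy *. set v := (F^-1)%g (a + y).
have Fu : F u = y by rewrite permKV.
have Fv : F v = a + y by rewrite permKV.
have uv : u != v.
  by rewrite -(inj_eq (@perm_inj _ F)) Fu Fv (addrC a y) eqxD.
apply/eqP => E.
apply: (@four_contra _ _ hAPN a (u + v) u v (al + u) (al + v)).
- by rewrite eq_add.
- rewrite /= !inE !negb_or uv /= andbT.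
  have u1 : u != al + u by rewrite (addrC al u) eqxD al0.
  have v1 : v != al + v by rewrite (addrC al v) eqxD al0.
  rewrite u1 v1 /=.
  have h1 : u != al + v.
    apply: contraNneq hAy => H; by rewrite H addrA addxx add0r Fv.
  have h2 : v != al + u.
    apply: contraNneq hAy => H; by rewrite -H Fv.
  by rewrite h1 h2 /= (inj_eq (addrI al)).
- by rewrite (addKx u v) Fu Fv addrCA addxx addr0.
- by rewrite (addrC u v) (addKx v u) Fu Fv (addxK y a).
- by rewrite -addrA (addKx u v) E addrCA addxx addr0.
- by rewrite -addrA (addrC u v) (addKx v u) E (addxK (F (al + u)) a).
Qed.

End Facts.

Lemma conn_Pa m (F : {perm 'rV['F_2]_m}) (a y z : 'rV['F_2]_m) :
  y \in Pa a -> connect (rot_step F a) y z -> z \in Pa a.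
Proof.
move=> Py /connectP [p Hp ->]; elim: p y Py Hp => [|x p IH] y Py //=.
by case/andP => /and3P [_ Px _] Hp; exact: IH Hp.
Qed.

Lemma card_Pa m (a : 'rV['F_2]_m) : a != 0 -> #|Pa a| = (2 ^ m - 2)%N.
Proof.
move=> a0.
have -> : Pa a = ~: [set 0; a] by apply/setP => y; rewrite !inE negb_or.
have := cardsC [set 0; a]; rewrite cards2 eq_sym a0 card_mx card_Fp //= mul1n.
by move=> <-; rewrite addKn.
Qed.

Theorem mainTheorem15 (m : nat) (hm : (3 <= m)%N) (F : {perm 'rV['F_2]_m})
  (hF0 : F 0 = 0) (hAPN : APN F) :
  forall a : 'rV['F_2]_m, a != 0 ->
  forall y : 'rV['F_2]_m, y \in Pa a ->
    (6 <= #|rotation_line F a y| <= 2 ^ m - 2)%N.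
Proof.
move=> a a0 y Py.
have sub : rotation_line F a y \subset Pa a.
  by apply/subsetP => z; rewrite inE; exact: conn_Pa.
apply/andP; split; last by rewrite -(@card_Pa m a a0) subset_leq_card.
set s := s_ a; set p := psi_ F a.
have sP' : forall x, x \in Pa a -> s x \in Pa a by move=> x; exact: sP.
have pP' : forall x, x \in Pa a -> p x \in Pa a by move=> x; exact: pP.
have stS : forall x, x \in Pa a -> rot_step F a x (s x).
  by move=> x Px; rewrite /rot_step Px sP' // eqxx.
have stP : forall x, x \in Pa a -> rot_step F a x (p x).
  by move=> x Px; rewrite /rot_step Px pP' // eqxx orbT.
apply/card_geqP; exists [:: y; s y; p y; s (p y); p (s y); s (p (s y))]; split => //.
  apply: (@six_distinct _ (fun x => x \in Pa a) s p sP' pP') => //.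
  - by move=> x; exact: ssK.
  - by move=> x; exact: ppK.
  - by move=> x _; exact: hS.
  - by move=> x _; exact: hP.
  - by move=> x; exact: hA.
  - by move=> x; exact: hB.
have Psy := sP' _ Py; have Ppy := pP' _ Py; have Ppsy := pP' _ Psy.
move=> z; rewrite !inE => /or4P [/eqP->|/eqP->|/eqP->|/or3P [/eqP->|/eqP->|/eqP->]].
- exact: connect0.
- exact: connect1 (stS _ Py).
- exact: connect1 (stP _ Py).
- exact: connect_trans (connect1 (stP _ Py)) (connect1 (stS _ Ppy)).
- exact: connect_trans (connect1 (stS _ Py)) (connect1 (stP _ Psy)).
- apply: connect_trans (connect1 (stS _ Py)) _.
  exact: connect_trans (connect1 (stP _ Psy)) (connect1 (stS _ Ppsy)).
Qed.
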